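(* For integers $r\ge 3$ and $n \ge \frac{(r-1)(2r+1)}{2}$, $$\mathrm{co}^{+}\mathrm{ex}(n,\mathrm{T}_r)=\left\lfloor \frac{n}{r}\right\rfloor,$$ where $\mathrm{co}^{+}\mathrm{ex}(n,\mathrm{T}_r)$ is the maximum of $\delta_{r-1}^{+}(\mathcal{H})$ over all $n$-vertex $\mathrm{T}_r$-free $r$-graphs $\mathcal{H}$.
   Context: An $r$-graph $\mathcal{H}$ is a collection of $r$-subsets (edges) of a finite vertex set $V(\mathcal{H})$. The shadow is $\partial\mathcal{H}=\{e\in\binom{V(\mathcal{H})}{r-1}\colon e\subseteq E \text{ for some } E\in\mathcal{H}\}$. For $e\in\partial\mathcal{H}$, $N_{\mathcal{H}}(e)=\{v\in V(\mathcal{H})\colon e\cup\{v\}\in\mathcal{H}\}$. The minimum positive codegree is $\delta_{r-1}^{+}(\mathcal{H})=\min\{|N_{\mathcal{H}}(e)|\colon e\in\partial\mathcal{H}\}$ (for the empty $r$-graph take this to be $0$). The $r$-uniform generalized triangle is $\mathrm{T}_r=\{\{1,\ldots,r-1,r\},\{1,\ldots,r-1,r+1\},\{r,r+1,\ldots,2r-1\}\}$; $\mathcal{H}$ is $\mathrm{T}_r$-free if it contains no subhypergraph isomorphic to $\mathrm{T}_r$. *)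

(* Defs.v *)
From mathcomp Require Import all_boot.
Set Implicit Arguments. Unset Strict Implicit. Unset Printing Implicit Defensive.

Definition rgraph (n r : nat) (H : {set {set 'I_n}}) : bool :=
  [forall E in H, #|E| == r].

Definition shadow (n r : nat) (H : {set {set 'I_n}}) : {set {set 'I_n}} :=
  [set e : {set 'I_n} | (#|e| == r.-1) && [exists E in H, e \subset E]].

Definition nbhd (n : nat) (H : {set {set 'I_n}}) (e : {set 'I_n}) : {set 'I_n} :=
  [set v : 'I_n | (v |: e) \in H].

(* Minimum positive codegree; 0 for the empty r-graph.  For nonempty H the
   shadow is nonempty, and every value #|nbhd H e| is <= n, so the initial
   value n of the min does not affect the result. *)
Definition minposcodeg (n r : nat) (H : {set {set 'I_n}}) : nat :=
  if H == set0 then 0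
  else \big[minn/n]_(e in shadow r H) #|nbhd H e|.

(* The generalized triangle T_r on vertex set 'I_(2r-1) (0-based):
   {0..r-2, r-1}, {0..r-2, r}, {r-1,..,2r-2}. *)
Definition Tr_edge1 (r : nat) : {set 'I_(2 * r - 1)} := [set i : 'I_(2 * r - 1) | i < r].
Definition Tr_edge2 (r : nat) : {set 'I_(2 * r - 1)} :=
  [set i : 'I_(2 * r - 1) | (i < r - 1) || (nat_of_ord i == r)].
Definition Tr_edge3 (r : nat) : {set 'I_(2 * r - 1)} := [set i : 'I_(2 * r - 1) | r - 1 <= i].

Definition contains_Tr (n r : nat) (H : {set {set 'I_n}}) : bool :=
  [exists f : {ffun 'I_(2 * r - 1) -> 'I_n},
    [&& injectiveb f, f @: Tr_edge1 r \in H, f @: Tr_edge2 r \in H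
      & f @: Tr_edge3 r \in H]].

Definition Tr_free (n r : nat) (H : {set {set 'I_n}}) : bool :=
  ~~ contains_Tr r H.

Definition copex (n r : nat) : nat :=
  \max_(H : {set {set 'I_n}} | rgraph r H && Tr_free r H)
     minposcodeg r H.

(* Main.v *)
Require Import Defs.
From mathcomp Require Import all_boot zify.
Set Implicit Arguments. Unset Strict Implicit. Unset Printing Implicit Defensive.

Lemma nth_spec (T : eqType) (a c : seq T) (x y : T) r i :
  2 <= r -> size a = r - 1 -> size c = r - 2 -> i < 2 * r - 1 ->
   [\/ (nth x (a ++ x :: y :: c) i \in a) /\ i < r - 1,
       nth x (a ++ x :: y :: c) i = x /\ i = r - 1,
       nth x (a ++ x :: y :: c) i = y /\ i = r |
      (nth x (a ++ x :: y :: c) i \in c) /\ r < i].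
Proof.
move=> hr ha hc hi; rewrite nth_cat ha.
case: (ltnP i (r - 1)) => h.
  by apply: Or41; split=> //; rewrite mem_nth // ha.
case: (ltnP i r) => h'.
  apply: Or42; have -> : i - (r - 1) = 0 by lia.
  by split=> //; lia.
case: (ltnP r i) => h''; last first.
  apply: Or43; have -> : i - (r - 1) = 1 by lia.
  by split=> //; lia.
apply: Or44; split=> //.
have -> : i - (r - 1) = (i - r - 1).+2 by lia.
by rewrite /= mem_nth // hc; lia.
Qed.
Ltac nlia := solve [repeat match goal with
  | H : is_true (~~ _) |- _ => clear H
  | H : is_true (_ \in _) |- _ => clear H
  | H : forall _, _ |- _ => clear H
  end; lia].

Lemma mkTr n r (H : {set {set 'I_n}}) (A C : {set 'I_n}) x y :
  2 <= r -> #|A| = r - 1 -> #|C| = r - 2 -> x != y ->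
  x \notin A -> y \notin A -> x \notin C -> y \notin C -> [disjoint A & C] ->
  x |: A \in H -> y |: A \in H -> x |: (y |: C) \in H -> contains_Tr r H.
Proof.
move=> hr hA hC xy xA yA xC yC dAC h1 h2 h3.
set s := enum A ++ x :: y :: enum C.
have sz : size s = 2 * r - 1.
  by rewrite /s size_cat /= -!cardE hA hC; nlia.
have us : uniq s.
  rewrite /s cat_uniq enum_uniq /= enum_uniq !inE !mem_enum negb_or andbT.
  rewrite (negbTE xA) (negbTE yA) (negbTE xC) (negbTE yC) orbF (negbTE xy) andbT /=.
  apply/hasPn => u; rewrite mem_enum => uC; rewrite mem_enum.
  by rewrite (disjointFl dAC uC).
have spec : forall i, i < 2 * r - 1 ->
   [\/ (nth x s i \in A) /\ i < r - 1, nth x s i = x /\ i = r - 1,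
       nth x s i = y /\ i = r | (nth x s i \in C) /\ r < i].
  move=> i hi; have := nth_spec x y hr (_ : size (enum A) = r - 1) (_ : size (enum C) = r - 2) hi.
  by rewrite !mem_enum; apply; rewrite -cardE.
pose f := [ffun i : 'I_(2 * r - 1) => nth x s i].
have fE : forall i, f i = nth x s i by move=> i; rewrite ffunE.
clearbody f.
have idx : forall u, u \in s -> index u s < 2 * r - 1 /\ nth x s (index u s) = u.
  by move=> u us'; rewrite -sz index_mem nth_index.
have sA : forall u, u \in A -> u \in s by move=> u uA; rewrite mem_cat mem_enum uA.
have sx : x \in s by rewrite mem_cat !inE eqxx orbT.
have sy : y \in s by rewrite mem_cat !inE eqxx !orbT.
have sC : forall u, u \in C -> u \in s.
  by move=> u uC; rewrite mem_cat; apply/orP; right; rewrite !in_cons mem_enum uC !orbT.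
clearbody s.
have nA : forall u, u \in A -> u != x /\ u != y /\ u \notin C.
  move=> u uA; split; first by apply: contraNneq xA => <-.
  split; first by apply: contraNneq yA => <-.
  by rewrite (disjointFr dAC uA).
have nC : forall u, u \in C -> u != x /\ u != y.
  move=> u uC; split; first by apply: contraNneq xC => <-.
  by apply: contraNneq yC => <-.
have pr1 : r - 1 < 2 * r - 1 by nlia.
have pr2 : r < 2 * r - 1 by nlia.
apply/existsP; exists f; apply/and4P; split.
- apply/injectiveP => i j; rewrite !fE => /eqP.
  rewrite nth_uniq ?sz // => /eqP; exact: val_inj.
- suff -> : f @: Tr_edge1 r = x |: A by [].
  apply/setP => u; apply/imsetP/setU1P.
  + case=> i; rewrite inE => hi ->; rewrite fE.
    case: (spec i (ltn_ord i)) => [[? ?]|[? ?]|[? ?]|[? ?]]; try nlia; by [right|left].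
  + case=> [->|uA].
      exists (Ordinal pr1); first by rewrite inE /=; nlia.
      rewrite fE /=; case: (spec _ pr1) => [[? ?]|[? ?]|[? ?]|[? ?]] //; nlia.
    case: (idx u (sA u uA)) => hi hn; exists (Ordinal hi); last by rewrite fE.
    have [ux [uy uC]] := nA u uA.
    rewrite inE /=; case: (spec _ hi); rewrite hn;
      [move=> [_ ?]; nlia | move=> [e _]; by rewrite e eqxx in ux | move=> [e _]; by rewrite e eqxx in uy | move=> [e _]; by rewrite e in uC].
- suff -> : f @: Tr_edge2 r = y |: A by [].
  apply/setP => u; apply/imsetP/setU1P.
  + case=> i; rewrite inE => hi ->; rewrite fE.
    case: (spec i (ltn_ord i)) => [[? ?]|[? ?]|[? ?]|[? ?]]; try nlia; by [right|left].
  + case=> [->|uA].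
      exists (Ordinal pr2); first by rewrite inE /= eqxx orbT.
      rewrite fE /=; case: (spec _ pr2) => [[? ?]|[? ?]|[? ?]|[? ?]] //; nlia.
    case: (idx u (sA u uA)) => hi hn; exists (Ordinal hi); last by rewrite fE.
    have [ux [uy uC]] := nA u uA.
    rewrite inE /=; case: (spec _ hi); rewrite hn;
      [move=> [_ ?]; apply/orP; left; nlia | move=> [e _]; by rewrite e eqxx in ux | move=> [e _]; by rewrite e eqxx in uy | move=> [e _]; by rewrite e in uC].
- suff -> : f @: Tr_edge3 r = x |: (y |: C) by [].
  apply/setP => u; apply/imsetP/setU1P.
  + case=> i; rewrite inE => hi ->; rewrite fE.
    case: (spec i (ltn_ord i)) => [[? ?]|[? ?]|[? ?]|[? ?]]; try nlia; first by left.
      by right; apply/setU1P; left.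
    by right; apply/setU1P; right.
  + case=> [->|/setU1P [->|uC]].
      exists (Ordinal pr1); first by rewrite inE /=.
      rewrite fE /=; case: (spec _ pr1) => [[? ?]|[? ?]|[? ?]|[? ?]] //; nlia.
      exists (Ordinal pr2); first by rewrite inE /=; nlia.
      rewrite fE /=; case: (spec _ pr2) => [[? ?]|[? ?]|[? ?]|[? ?]] //; nlia.
    case: (idx u (sC u uC)) => hi hn; exists (Ordinal hi); last by rewrite fE.
    have [ux uy] := nC u uC.
    rewrite inE /=; case: (spec _ hi); rewrite hn;
      [move=> [e _]; by rewrite (disjointFl dAC uC) in e | move=> [e _]; by rewrite e eqxx in ux | move=> [e _]; by rewrite e eqxx in uy | move=> [_ ?]; nlia].
Qed.

Lemma lower n r' : 1 <= r' -> r'.+1 <= n ->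
  exists H : {set {set 'I_n}}, [&& Defs.rgraph r'.+1 H, Tr_free r'.+1 H & (n %/ r'.+1 <= minposcodeg r'.+1 H)].
Proof.
move=> hr hn.
set q := n %/ r'.+1.
have hq : 0 < q by rewrite /q divn_gt0.
have hqn : q * r'.+1 <= n by exact: leq_divM.
pose p := fun i : 'I_n => (inord (minn (i %/ q) r') : 'I_r'.+1).
have hp : forall i, val (p i) = minn (i %/ q) r'.
  by move=> i; rewrite /p /= inordK // ltnS geq_minr.
have mkP : forall (j : 'I_r'.+1) (k : 'I_q), j * q + k < n.
  move=> j k; have := ltn_ord j; have := ltn_ord k; move: hqn; clear; nia.
pose mk := fun j k => Ordinal (mkP j k).
have pmk : forall j k, p (mk j k) = j.
  move=> j k; apply: val_inj; rewrite hp /= divnMDl // divn_small // addn0.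
  by apply/minn_idPl; rewrite -ltnS.
pose Hc := [set E : {set 'I_n} | (#|E| == r'.+1) && (#|p @: E| == r'.+1)].
have injE : forall E, E \in Hc -> {in E &, injective p}.
  move=> E; rewrite inE => /andP [/eqP h1 h2]; apply/imset_injP.
  by rewrite h1.
have cardH : forall E, E \in Hc -> #|E| = r'.+1.
  by move=> E; rewrite inE => /andP [/eqP].
have fullH : forall E, E \in Hc -> p @: E = setT.
  move=> E; rewrite inE => /andP [_ /eqP h]; apply/eqP.
  by rewrite eqEcard subsetT cardsT card_ord h leqnn.
exists Hc; apply/and3P; split.
- by rewrite /Defs.rgraph; apply/forallP => E; apply/implyP => /cardH ->.
- apply/negP => /existsP [f /and4P [/injectiveP fi h1 h2 h3]].
  have pa : r' < 2 * r'.+1 - 1 by lia.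
  have pb : r'.+1 < 2 * r'.+1 - 1 by lia.
  set ia := Ordinal pa; set ib := Ordinal pb.
  have ia1 : ia \in Tr_edge1 r'.+1 by rewrite inE.
  have ia3 : ia \in Tr_edge3 r'.+1 by rewrite inE /= subn1.
  have ib2 : ib \in Tr_edge2 r'.+1 by rewrite inE /= eqxx orbT.
  have ib3 : ib \in Tr_edge3 r'.+1 by rewrite inE /= subn1.
  have ib1 : ib \notin Tr_edge1 r'.+1 by rewrite inE /= ltnn.
  have e12 : forall k, k \in Tr_edge1 r'.+1 -> k != ia -> k \in Tr_edge2 r'.+1.
    move=> k; rewrite !inE => hk hka; apply/orP; left.
    have : val k != r' by apply: contra hka => /eqP e; apply/eqP/val_inj.
    move: hk; rewrite /= => hk' hk''; clear -hk' hk''; lia.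
  have pab : p (f ib) = p (f ia).
    have : p (f ib) \in p @: (f @: Tr_edge1 r'.+1) by rewrite fullH.
    case/imsetP => u /imsetP [k hk ->] e.
    case: (eqVneq k ia) => [<- //|kia].
    have ek : f ib = f k.
      by apply: (injE _ h2); rewrite ?e //; apply: imset_f => //; apply: e12.
    by move: ib1; rewrite (fi _ _ ek) hk.
  have : f ib = f ia by apply: (injE _ h3) => //; apply: imset_f.
  by move/fi/(congr1 val) => /=; lia.
- have Hne : Hc != set0.
    pose k0 : 'I_q := Ordinal hq.
    apply/set0Pn; exists [set mk j k0 | j : 'I_r'.+1].
    have ii : {in [set mk j k0 | j : 'I_r'.+1] &, injective p}.
      by move=> u v /imsetP [j _ ->] /imsetP [j' _ ->]; rewrite !pmk => ->.
    have ci : #|[set mk j k0 | j : 'I_r'.+1]| = r'.+1.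
      rewrite card_imset ?cardsT ?card_ord //.
      by move=> j j' e; rewrite -(pmk j k0) e pmk.
    by rewrite inE ci card_in_imset // ci eqxx.
  rewrite /minposcodeg (negbTE Hne).
  apply: (big_ind (fun m => q <= m)); first exact: leq_div.
    by move=> a b ha hb; rewrite leq_min ha hb.
  move=> e; rewrite inE => /andP [/eqP ce /existsP [E /andP [hE eE]]].
  have ie : {in e &, injective p}.
    by move=> u v hu hv; apply: (injE _ hE); apply: (subsetP eE).
  have cpe : #|p @: e| = r' by rewrite card_in_imset.
  case: (pickP (fun j => j \notin p @: e)) => [j hj|hall]; last first.
    have : #|[set: 'I_r'.+1]| <= #|p @: e|.
      by apply: subset_leq_card; apply/subsetP => j _; move: (hall j) => /= /negbFE.
    by rewrite cardsT card_ord cpe ltnn.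
  apply: (@leq_trans #|mk j @: setT|).
    by rewrite card_imset ?cardsT ?card_ord // => k k' /(congr1 val) /= /addnI /val_inj.
  apply: subset_leq_card; apply/subsetP => _ /imsetP [k _ ->].
  have nie : mk j k \notin e by apply: contra hj => h; rewrite -{1}(pmk j k); apply: imset_f.
  rewrite inE inE cardsU1 nie ce imsetU1 cardsU1 cpe pmk hj eqxx.
  done.
Qed.

Lemma bigmin_le (I : finType) (P : pred I) (F : I -> nat) m e :
  P e -> \big[minn/m]_(i | P i) F i <= F e.
Proof.
move=> Pe; have : e \in index_enum I by rewrite mem_index_enum.
elim: (index_enum I) => // a l IH; rewrite in_cons big_cons.
case/orP => [/eqP <-|h]; first by rewrite Pe geq_minl.
by case: ifP => _; [rewrite geq_min IH ?orbT | exact: IH].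
Qed.

Lemma upper n r (H : {set {set 'I_n}}) : 3 <= r -> r * (r - 1) <= n ->
  Defs.rgraph r H -> Tr_free r H -> minposcodeg r H <= n %/ r.
Proof.
move=> hr hn hg hf.
have cardH : forall E, E \in H -> #|E| = r.
  by move=> E hE; move/forallP: hg => /(_ E); rewrite hE => /eqP.
case: (eqVneq H set0) => [-> | Hne]; first by rewrite /minposcodeg eqxx.
have minle : forall e, e \in shadow r H -> minposcodeg r H <= #|nbhd H e|.
  by move=> e he; rewrite /minposcodeg (negbTE Hne); exact: bigmin_le.
have r0 : 0 < r by nlia.
have shE : forall G w, G \in H -> w \in G -> G :\ w \in shadow r H.
  move=> G w hG wG; rewrite inE; apply/andP; split.
    by move: (cardsD1 w G); rewrite wG cardH //; nlia.
  by apply/existsP; exists G; rewrite hG subsetDl.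
set d := minposcodeg r H.
case/set0Pn: Hne => F hF.
have cF := cardH F hF.
set S := fun x => nbhd H (F :\ x).
case: (boolP [exists x in F, exists y in F,
              (x != y) && [exists v, (v \in S x) && (v \in S y)]]); last first.
  move=> hno.
  have disj : forall v x y, x \in F -> y \in F -> v \in S x -> v \in S y -> x = y.
    move=> v x y xF yF vx vy; apply/eqP; apply/negPn/negP => xy.
    move/negP: hno; apply; apply/existsP; exists x; rewrite xF; apply/existsP.
    by exists y; rewrite yF xy; apply/existsP; exists v; rewrite vx vy.
  have hsum : \sum_(x in F) #|S x| <= n.
    rewrite (eq_bigr (fun x => \sum_v (if v \in S x then 1 else 0))); last first.
      by move=> x _; rewrite -sum1_card big_mkcond.
    rewrite exchange_big /=.
    apply: (@leq_trans (\sum_(v : 'I_n) 1)); last by rewrite sum1_card card_ord.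
    apply: leq_sum => v _.
    case: (pickP (fun x => (x \in F) && (v \in S x))) => [x0 /andP [x0F vx0]|none].
      rewrite (bigD1 x0) //= vx0 big1 //.
      move=> x /andP [xF xx0]; case: ifP => // vx.
      by move: xx0; rewrite (disj v x x0 xF x0F vx vx0) eqxx.
    by rewrite big1 // => x xF; case: ifP => // vx; move: (none x); rewrite xF vx.
  have : r * d <= n.
    apply: leq_trans hsum; rewrite -cF -sum_nat_const.
    by apply: leq_sum => x xF; apply: minle; apply: shE.
  by move=> h; rewrite leq_divRL // mulnC.
case/existsP => x /andP [xF /existsP [y /andP [yF /andP [xy /existsP [v /andP [vx vy]]]]]].
rewrite /S inE in vx; rewrite /S inE in vy.
have cFx : #|F :\ x| = r - 1 by move: (cardsD1 x F); rewrite xF cF; nlia.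
have cFy : #|F :\ y| = r - 1 by move: (cardsD1 y F); rewrite yF cF; nlia.
have vFx : v \notin F :\ x.
  by apply/negP => h; move: (cardH _ vx); rewrite cardsU1 h cFx; nlia.
have vFy : v \notin F :\ y.
  by apply/negP => h; move: (cardH _ vy); rewrite cardsU1 h cFy; nlia.
have vF : v \notin F.
  apply/negP => h; move: vFx vFy; rewrite !inE h !andbT !negbK => /eqP e1 /eqP e2.
  by move: xy; rewrite -e1 e2 eqxx.
have vx' : v != x by apply: contraNneq vF => ->.
have vy' : v != y by apply: contraNneq vF => ->.
set W := v |: F.
set A := W :\ x :\ y.
have eqx : x |: A = v |: (F :\ y).
  apply/setP => u; rewrite !inE.
  case: (eqVneq u x) => [->|ux]; first by rewrite xF (negbTE xy) orbT.
  by case: (eqVneq u y) => [->|uy] //=; rewrite eq_sym (negbTE vy').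
have eqy : y |: A = v |: (F :\ x).
  apply/setP => u; rewrite !inE.
  case: (eqVneq u y) => [->|uy]; first by rewrite yF eq_sym (negbTE xy) orbT.
  by case: (eqVneq u x) => [->|ux] //=; rewrite eq_sym (negbTE vx').
have xW : x \in W by rewrite inE xF orbT.
have yWx : y \in W :\ x by rewrite !inE yF orbT eq_sym xy.
have cW : #|W| = r.+1 by rewrite cardsU1 vF cF.
have cA : #|A| = r - 1.
  rewrite /A; move: (cardsD1 x W) (cardsD1 y (W :\ x)); rewrite xW yWx cW; nlia.
have xA : x \notin A by rewrite !inE eqxx andbF.
have yA : y \notin A by rewrite !inE eqxx.
pose P k := [exists G in H, [&& x \in G, y \in G & #|G :&: W| == k]].
have exP : exists k, P k.
  by exists #|F :&: W|; apply/existsP; exists F; rewrite hF xF yF eqxx.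
case: (ex_minnP exP) => k0 /existsP [G /andP [hG /and3P [xG yG /eqP hk]]] hmin.
case: (boolP (G :&: A == set0)) => [h0|].
  have GA : forall u, u \in G -> u \in A -> False.
    by move=> u uG uA; move/eqP/setP: h0 => /(_ u); rewrite !inE uG; move: uA; rewrite !inE => ->.
  set C := G :\ x :\ y.
  have cG := cardH G hG.
  have yGx : y \in G :\ x by rewrite !inE yG eq_sym xy.
  have cC : #|C| = r - 2.
    rewrite /C; move: (cardsD1 x G) (cardsD1 y (G :\ x)); rewrite xG yGx cG; nlia.
  have : contains_Tr r H.
    apply: (@mkTr n r H A C x y) => //; first nlia.
    - by rewrite !inE eqxx andbF.
    - by rewrite !inE eqxx.
    - apply/pred0P => u /=; apply/negP => /andP [uA uC]; apply: (GA u) => //.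
      by move: uC; rewrite !inE => /andP [_ /andP [_ ->]].
    - by rewrite eqx.
    - by rewrite eqy.
    - suff -> : x |: (y |: C) = G by [].
      apply/setP => u; rewrite !inE.
      case: (eqVneq u x) => [->|ux] //=; case: (eqVneq u y) => [->|uy] //=.
  by move/negP: hf.
case/set0Pn => w; rewrite inE => /andP [wG wA].
have wW : w \in W by move: wA; rewrite !inE => /andP [_ /andP [_ ->]].
have wx : w != x by apply: contraNneq xA => <-.
have wy : w != y by apply: contraNneq yA => <-.
set B := G :\ w.
have hB := shE G w hG wG.
have dle := minle B hB.
have BW : #|G :&: W| = (#|B :&: W|).+1.
  rewrite (cardsD1 w (G :&: W)) inE wG wW add1n; congr (_.+1); apply: eq_card => u.
  by rewrite !inE; case: (u == w).
have sub : nbhd H B \subset W :\: B.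
  apply/subsetP => z; rewrite inE => hz.
  have zB : z \notin B.
    apply/negP => zB; move: (cardH _ hz); rewrite cardsU1 zB /= add0n.
    by move: (cardsD1 w G); rewrite wG (cardH _ hG) /B => h1 h2; move: h1; rewrite h2 -{1}[r]add0n => /eqP; rewrite eqn_add2r.
  rewrite inE zB /=; apply/negPn/negP => zW.
  have : P #|B :&: W|.
    apply/existsP; exists (z |: B); rewrite hz !inE xG yG /= (eq_sym x w) wx (eq_sym y w) wy !orbT /=.
    suff -> : (z |: B) :&: W = B :&: W by [].
    apply/setP => u; rewrite !inE.
    case: (eqVneq u z) => [->|uz] //=.
    by move: zW; rewrite !inE => /negbTE ->; rewrite !andbF.
  by move/hmin; rewrite -hk BW ltnn.
have : #|W :\: B| <= r - 1.
  rewrite cardsD cW.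
  have : #|[set x; y]| <= #|W :&: B|.
    apply: subset_leq_card; apply/subsetP => u; rewrite !inE.
    by case/orP => /eqP ->; rewrite ?xF ?yF ?xG ?yG ?(eq_sym x w) ?(eq_sym y w) ?wx ?wy ?orbT.
  rewrite cards2 xy; nlia.
move=> h2; apply: (leq_trans dle); apply: (leq_trans (subset_leq_card sub)).
apply: (leq_trans h2); rewrite leq_divRL //; nlia.
Qed.

Theorem corollary1p3 (r n : nat) :
  3 <= r -> (r - 1) * (2 * r + 1) <= 2 * n ->
  copex n r = n %/ r.
Proof.
move=> hr hn.
have hn' : r * (r - 1) <= n by nia.
apply/eqP; rewrite eqn_leq; apply/andP; split.
  apply/bigmax_leqP => H /andP [hg hf]; exact: upper.
case: r hr hn hn' => // r' hr hn hn'.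
have h1 : 1 <= r' by lia.
have h2 : r'.+1 <= n by nia.
case: (lower h1 h2) => H /and3P [hg hf hm].
apply: (leq_trans hm); apply: (@leq_bigmax_cond _ (fun H => Defs.rgraph r'.+1 H && Tr_free r'.+1 H)).
by rewrite hg hf.
Qed.
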